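(* The sets $\{123,2413\}$ and $\{132,2314\}$ are forest-Wilf equivalent, and the sets $\{123,3142\}$ and $\{132,3124\}$ are forest-Wilf equivalent.
   Context: A rooted labeled forest on $[n]$ is an unordered forest on $n$ vertices, each component with a distinguished root, with distinct labels from $[n]$. For a permutation (pattern) $\pi$ of $[k]$, an instance of $\pi$ is a sequence of vertices $v_1,\dots,v_k$ with $v_i$ a strict ancestor of $v_{i+1}$ whose labels are in the same relative order as $\pi$; a forest avoids a set of patterns if it has no instance of any of them. Two sets $S,S'$ are forest-Wilf equivalent if for every $n\ge0$ the number of rooted labeled forests on $[n]$ avoiding $S$ equals the number avoiding $S'$. *)

(* Defs.v *)
From mathcomp Require Import all_boot.
Set Implicit Arguments. Unset Strict Implicit. Unset Printing Implicit Defensive.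

(* A rooted labeled forest on [n] is encoded by its parent map:
   vertex x : 'I_n (label x+1) has parent f x = Some y, or is a root (f x = None).
   Labels are the vertices themselves (shifted by one, which does not affect
   relative order). *)
Definition parent_map (n : nat) := {ffun 'I_n -> option 'I_n}.

Definition par n (f : parent_map n) (o : option 'I_n) : option 'I_n :=
  if o is Some x then f x else None.

(* acyclicity: every vertex reaches a root; in an n-vertex forest this happens
   within n parent steps. *)
Definition is_forest n (f : parent_map n) : bool :=
  [forall x : 'I_n, iter n (par f) (Some x) == None].

(* u is a strict ancestor of v (depths are < n, so k+1 <= n steps suffice). *)
Definition strict_anc n (f : parent_map n) (u v : 'I_n) : bool :=
  [exists k : 'I_n, iter k.+1 (par f) (Some v) == Some u].

(* A pattern is a permutation of [k] written in one-line notation as a seq nat. *)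
Definition has_instance n (f : parent_map n) (pi : seq nat) : bool :=
  [exists t : {ffun 'I_(size pi) -> 'I_n},
     [forall i : 'I_(size pi), forall j : 'I_(size pi),
        ((i.+1 == j :> nat) ==> strict_anc f (t i) (t j)) &&
        ((t i < t j) == (nth 0 pi i < nth 0 pi j))]].

Definition avoids n (f : parent_map n) (S : seq (seq nat)) : bool :=
  all (fun pi => ~~ has_instance f pi) S.

Definition num_avoiding (S : seq (seq nat)) (n : nat) : nat :=
  #|[pred f : parent_map n | is_forest f && avoids f S]|.

Definition forest_wilf_equiv (S S' : seq (seq nat)) : Prop :=
  forall n : nat, num_avoiding S n = num_avoiding S' n.

(* Main.v *)
Require Import Defs.
From mathcomp Require Import all_boot.
From mathcomp Require Import zify.
Set Implicit Arguments. Unset Strict Implicit. Unset Printing Implicit Defensive.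



Section Rev.
Variable n : nat.
Definition leo : rel 'I_n := fun x y => (x <= y)%N.
Definition srt (G : {set 'I_n}) := sort leo (enum G).
Definition revs (G : {set 'I_n}) (x : 'I_n) : 'I_n :=
  nth x (srt G) ((size (srt G)).-1 - index x (srt G)).

Lemma leo_trans : transitive leo. Proof. by move=> a b c; rewrite /leo; lia. Qed.
Lemma leo_total : total leo. Proof. by move=> a b; rewrite /leo; lia. Qed.

Lemma srt_uniq (G : {set 'I_n}) : uniq (srt G).
Proof. by rewrite sort_uniq enum_uniq. Qed.
Lemma mem_srt (G : {set 'I_n}) (x : 'I_n) : (x \in srt G) = (x \in G).
Proof. by rewrite mem_sort mem_enum. Qed.

Lemma srt_lt (G : {set 'I_n}) (x0 : 'I_n) i j : i < size (srt G) -> j < size (srt G) ->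
  ((nth x0 (srt G) i < nth x0 (srt G) j)%N = (i < j)).
Proof.
move=> Hi Hj.
have So : sorted leo (srt G) by apply: sort_sorted; exact: leo_total.
have H := sorted_ltn_nth leo_trans x0 So.
have U := srt_uniq G.
case: (ltngtP i j) => Hij.
- have := H i j Hi Hj Hij; rewrite /leo => Hle.
  have: nth x0 (srt G) i != nth x0 (srt G) j.
    by rewrite nth_uniq //; lia.
  move=> /eqP Hne. apply/idP. have : (nth x0 (srt G) i : nat) != nth x0 (srt G) j.
    by apply/eqP => E; apply: Hne; apply: val_inj.
  lia.
- have := H j i Hj Hi Hij; rewrite /leo => Hle. apply/negbTE. lia.
- by subst; rewrite ltnn.
Qed.

Lemma revs_in (G : {set 'I_n}) (x : 'I_n) : x \in G -> revs G x \in G.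
Proof.
move=> xG; rewrite /revs -mem_srt; apply: mem_nth.
have: x \in srt G by rewrite mem_srt.
rewrite -index_mem => H. apply: (leq_ltn_trans (leq_subr _ _)); rewrite ltn_predL; exact: (leq_ltn_trans (leq0n _) H).
Qed.

Lemma index_revs (G : {set 'I_n}) (x : 'I_n) : x \in G ->
  index (revs G x) (srt G) = (size (srt G)).-1 - index x (srt G).
Proof.
move=> xG; rewrite /revs index_uniq //; last exact: srt_uniq.
have: x \in srt G by rewrite mem_srt.
rewrite -index_mem => H. set k := size (srt G) in H *. lia.
Qed.

Lemma revsK (G : {set 'I_n}) (x : 'I_n) : x \in G -> revs G (revs G x) = x.
Proof.
move=> xG. have H: index x (srt G) < size (srt G) by rewrite index_mem mem_srt.
rewrite {1}/revs index_revs //.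
have ->: (size (srt G)).-1 - ((size (srt G)).-1 - index x (srt G)) = index x (srt G) by lia.
by rewrite nth_index // mem_srt.
Qed.

Lemma revsE (G : {set 'I_n}) (x d : 'I_n) : x \in G ->
  revs G x = nth d (srt G) ((size (srt G)).-1 - index x (srt G)).
Proof.
move=> xG; rewrite /revs; apply: set_nth_default.
have: x \in srt G by rewrite mem_srt.
rewrite -index_mem => H. apply: (leq_ltn_trans (leq_subr _ _)); rewrite ltn_predL; exact: (leq_ltn_trans (leq0n _) H).
Qed.

Lemma revs_lt (G : {set 'I_n}) (x y : 'I_n) : x \in G -> y \in G ->
  ((revs G x < revs G y)%N = (y < x)%N).
Proof.
move=> xG yG.
have Hx: index x (srt G) < size (srt G) by rewrite index_mem mem_srt.
have Hy: index y (srt G) < size (srt G) by rewrite index_mem mem_srt.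
rewrite (revsE x xG) (revsE x yG).
rewrite srt_lt; last first.
  apply: (leq_ltn_trans (leq_subr _ _)); rewrite ltn_predL; exact: (leq_ltn_trans (leq0n _) Hx).
  apply: (leq_ltn_trans (leq_subr _ _)); rewrite ltn_predL; exact: (leq_ltn_trans (leq0n _) Hx).
rewrite -{2}(nth_index x (x:=x) (s:=srt G)) ?mem_srt //.
rewrite -{2}(nth_index x (x:=y) (s:=srt G)) ?mem_srt //.
rewrite srt_lt //.
set k := size (srt G) in Hx Hy *. lia.
Qed.
End Rev.
Ltac is_arith b := match b with | leq _ _ => idtac | _ => fail end.
Ltac cln := repeat match goal with
 | H : is_true ?b |- _ => tryif is_arith b then fail else clear H
 | H : forall _, _ |- _ => clear H
 | H : ~ ?P |- _ => tryif (match P with _ = _ => idtac end) then fail else clear H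
 end.
Ltac lia' := cln; lia.

Section Abs.
Variables (n : nat) (anc : rel 'I_n).
Hypothesis atr : forall a b c, anc a b -> anc b c -> anc a c.
Hypothesis airr : forall a, ~~ anc a a.
Hypothesis atot : forall a b c, anc a c -> anc b c -> [\/ a = b, anc a b | anc b a].

Definition isN (lam : 'I_n -> nat) x := [exists u, anc u x && (lam u < lam x)].
Definition Pm (lam : 'I_n -> nat) x u := anc u x && [forall v, anc v x ==> (lam u <= lam v)].
Definition Pk (lam : 'I_n -> nat) x u :=
  [&& anc u x, lam u < lam x & [forall v, anc v u ==> (lam x < lam v)]].
Definition sk (P : 'I_n -> 'I_n -> bool) x y := [exists u, P x u && P y u].
Definition Cond (lam : 'I_n -> nat) P (b : bool) :=
  forall x c, isN lam x -> isN lam c -> anc x c ->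
   (sk P x c -> (lam c < lam x) = b) /\
   (~~ sk P x c -> forall v, anc v x -> lam c < lam v).
Definition KeyOK lam (P : 'I_n -> 'I_n -> bool) :=
  [/\ (forall x, isN lam x -> exists u, P x u),
      (forall x u u', P x u -> P x u' -> u = u'),
      (forall x u, isN lam x -> P x u -> anc u x /\ lam u < lam x) &
      (forall x u, isN lam x -> P x u -> ~~ isN lam u)].

Definition ch3 (lam : 'I_n -> nat) (Q : nat -> nat -> nat -> Prop) :=
  exists a b c, [/\ anc a b, anc b c & Q (lam a) (lam b) (lam c)].
Definition ch4 (lam : 'I_n -> nat) (Q : nat -> nat -> nat -> nat -> Prop) :=
  exists a b c d, [/\ anc a b, anc b c, anc c d & Q (lam a) (lam b) (lam c) (lam d)].

Definition Q123 a b c := a < b /\ b < c.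
Definition Q132 a b c := a < c /\ c < b.
Definition Q2413 a b c d := [/\ c < a, a < d & d < b].
Definition Q2314 a b c d := [/\ c < a, a < b & b < d].
Definition Q3142 a b c d := [/\ b < d, d < a & a < c].
Definition Q3124 a b c d := [/\ b < c, c < a & a < d].

Lemma ancne a b : anc a b -> a <> b.
Proof. by move=> H E; subst; move: (airr b); rewrite H. Qed.

Lemma isNP lam x : reflect (exists u, anc u x /\ lam u < lam x) (isN lam x).
Proof.
apply: (iffP existsP) => [[u /andP[H1 H2]]|[u [H1 H2]]]; exists u => //.
by rewrite H1 H2.
Qed.

Lemma notNP lam x : ~~ isN lam x -> forall v, anc v x -> lam x <= lam v.
Proof.
move=> H v Hv; rewrite leqNgt; apply/negP => H2; move/negP: H; apply.
by apply/isNP; exists v.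
Qed.

Section Lam.
Variable lam : 'I_n -> nat.
Hypothesis linj : injective lam.

Lemma lam_ne x y : x <> y -> lam x <> lam y.
Proof. by move=> H E; apply: H; apply: linj. Qed.

Lemma anc_lt x y : anc x y -> lam x <> lam y.
Proof. by move=> H; apply: lam_ne; apply: ancne. Qed.

Lemma skP (P : 'I_n -> 'I_n -> bool) x y :
  reflect (exists u, P x u /\ P y u) (sk P x y).
Proof.
apply: (iffP existsP) => [[u /andP[H1 H2]]|[u [H1 H2]]]; exists u => //.
by rewrite H1 H2.
Qed.

Lemma Pm_ok : KeyOK lam (Pm lam).
Proof.
split.
- move=> x /isNP [w [Hw _]].
  have := arg_minnP lam (P := fun u => anc u x) Hw.
  case=> u Hu Hmin; exists u; rewrite /Pm Hu /=.
  by apply/forallP => v; apply/implyP => Hv; apply: Hmin.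
- move=> x u u' /andP[H1 /forallP H2] /andP[H1' /forallP H2'].
  apply: linj. have := implyP (H2 u') H1'. have := implyP (H2' u) H1. lia'.
- move=> x u /isNP [w [Hw Hwl]] /andP[H1 /forallP H2]; split => //.
  have := implyP (H2 w) Hw. lia'.
- move=> x u _ /andP[H1 /forallP H2]; apply/isNP => [[w [Hw Hwl]]].
  have := implyP (H2 w) (atr Hw H1). lia'.
Qed.

Lemma Pk_ok : KeyOK lam (Pk lam).
Proof.
split.
- move=> x /isNP [w [Hw Hwl]].
  pose S := fun u => anc u x && (lam u < lam x).
  pose d u := #|[set v | anc v u]|.
  have Sw : S w by rewrite /S Hw Hwl.
  have := arg_minnP d Sw.
  case=> u /andP[Hu Hul] Hmin; exists u; rewrite /Pk Hu Hul /=.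
  apply/forallP => v; apply/implyP => Hv.
  rewrite ltnNge leq_eqVlt negb_or; apply/andP; split.
    by apply/eqP => /linj E; subst; move: (atr Hv Hu); rewrite (negbTE (airr _)).
  apply/negP => Hvl.
  have := Hmin v; rewrite /S (atr Hv Hu) Hvl => /(_ isT).
  rewrite /d leqNgt; move/negP; apply.
  apply: proper_card; apply/properP; split.
    by apply/subsetP => z; rewrite !inE => Hz; apply: atr Hz Hv.
  by exists v; rewrite !inE ?Hv // airr.
- move=> x u u' /and3P[H1 H2 /forallP H3] /and3P[H1' H2' /forallP H3'].
  case: (atot H1 H1') => [//|Huu|Huu].
  + have := implyP (H3' u) Huu. lia'.
  + have := implyP (H3 u') Huu. lia'.
- by move=> x u _ /and3P[H1 H2 _].
- move=> x u _ /and3P[H1 H2 /forallP H3]; apply/isNP => [[w [Hw Hwl]]].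
  have := implyP (H3 w) Hw. lia'.
Qed.

Lemma C123 P : Cond lam P true -> ~ ch3 lam Q123.
Proof.
move=> C [a [b [c [Hab Hbc [H1 H2]]]]].
have Nb : isN lam b by apply/isNP; exists a.
have Nc : isN lam c by apply/isNP; exists a; split; [exact: atr Hab Hbc| lia'].
have [C1 C2] := C b c Nb Nc Hbc.
case: (boolP (sk P b c)) => Hs.
  have := C1 Hs. lia'.
have := C2 Hs a Hab. lia'.
Qed.

Lemma C132 P : Cond lam P false -> ~ ch3 lam Q132.
Proof.
move=> C [a [b [c [Hab Hbc [H1 H2]]]]].
have Nb : isN lam b by apply/isNP; exists a; split => //; lia'.
have Nc : isN lam c by apply/isNP; exists a; split; [exact: atr Hab Hbc| lia'].
have [C1 C2] := C b c Nb Nc Hbc.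
case: (boolP (sk P b c)) => Hs.
  have := C1 Hs. lia'.
have := C2 Hs a Hab. lia'.
Qed.


Lemma lt_or a b : a <> b -> lam a < lam b \/ lam b < lam a.
Proof. move=> /lam_ne H. lia'. Qed.

Lemma EK (P : 'I_n -> 'I_n -> bool) x : KeyOK lam P -> isN lam x ->
  exists u, [/\ P x u, anc u x, lam u < lam x & ~~ isN lam u].
Proof.
case=> E U K1 K2 Nx; have [u Hu] := E x Nx; exists u.
have [H1 H2] := K1 x u Nx Hu; split => //; exact: K2 Hu.
Qed.

Lemma charA1 : (~ ch3 lam Q123 /\ ~ ch4 lam Q2413) <-> Cond lam (Pm lam) true.
Proof.
have OK := Pm_ok.
split.
- move=> [H123 H2413] x c Nx Nc Hxc.
  have [ux [Pux Hux Hlux NNux]] := EK OK Nx.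
  split.
  + move=> _; apply/idP; case: (lt_or (ancne Hxc)) => // Hl; exfalso.
    apply: H123; exists ux, x, c; split => //; rewrite /Q123; lia'.
  + move=> Hs v Hv; case: (lt_or (ancne (atr Hv Hxc))) => Hl //; exfalso.
    move: Pux => /andP[_ /forallP Pux]; have := implyP (Pux v) Hv => Huv.
    case: (lt_or (ancne Hxc)) => Hcx.
    * apply: H123; exists ux, x, c; split => //; rewrite /Q123; lia'.
    * have [w [Pwc Hwc Hlw NNw]] := EK OK Nc.
      have Hxw : anc x w.
        case: (atot Hwc Hxc) => [E|Hwx|//].
          by subst; rewrite Nx in NNw.
        move/negP: Hs; elim; apply/skP; exists w; split => //.
        rewrite /Pm Hwx /=; apply/forallP => z; apply/implyP => Hz.
        by move: Pwc => /andP[_ /forallP Pwc]; apply: (implyP (Pwc z)); apply: atr Hz Hxc.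
      have Hwu : lam w < lam ux.
        move: (Pwc) => /andP[_ /forallP Pwc']; have := implyP (Pwc' ux) (atr Hux Hxc).
        have := anc_lt (atr Hux Hxw). lia'.
      apply: H2413; exists ux, x, w, c; split => //; rewrite /Q2413; split; lia'.
- move=> C; split; first exact: C123 C.
  move=> [a [b [c [d [Hab Hbc Hcd [H1 H2 H3]]]]]].
  have Nb : isN lam b by apply/isNP; exists a; split => //; lia'.
  have Nd : isN lam d by apply/isNP; exists c; split => //; lia'.
  have [C1 C2] := C b d Nb Nd (atr Hbc Hcd).
  case: (boolP (sk (Pm lam) b d)) => Hs; last by have := C2 Hs a Hab; lia'.
  move/skP: Hs => [u [/andP[Hub _] Pdu]].
  have Pcu : Pm lam c u.
    rewrite /Pm (atr Hub Hbc) /=; apply/forallP => z; apply/implyP => Hz.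
    by move: Pdu => /andP[_ /forallP P]; apply: (implyP (P z)); apply: atr Hz Hcd.
  have Nc : isN lam c.
    apply/isNP; exists u; split; first exact: atr Hub Hbc.
    move: Pdu => /andP[_ /forallP P]; have := implyP (P c) Hcd.
    have := anc_lt (atr Hub Hbc). lia'.
  have [C1' _] := C c d Nc Nd Hcd.
  have : sk (Pm lam) c d by apply/skP; exists u.
  move/C1'. lia'.
Qed.

Lemma charB1 : (~ ch3 lam Q132 /\ ~ ch4 lam Q2314) <-> Cond lam (Pm lam) false.
Proof.
have OK := Pm_ok.
split.
- move=> [H132 H2314] x c Nx Nc Hxc.
  have [ux [Pux Hux Hlux NNux]] := EK OK Nx.
  split.
  + move=> /skP [u [Pxu Pcu]]; apply/negbTE/negP => Hl.
    have E : u = ux by case: OK => _ U _ _; apply: U Pxu Pux.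
    subst u.
    have [_ Hl2] : anc ux c /\ lam ux < lam c by case: OK => _ _ K1 _; apply: K1.
    apply: H132; exists ux, x, c; split => //; rewrite /Q132; lia'.
  + move=> Hs v Hv; case: (lt_or (ancne (atr Hv Hxc))) => Hl //; exfalso.
    move: (Pux) => /andP[_ /forallP Pux']; have := implyP (Pux' v) Hv => Huv.
    case: (lt_or (ancne Hxc)) => Hcx.
    * have [w [Pwc Hwc Hlw NNw]] := EK OK Nc.
      have Hxw : anc x w.
        case: (atot Hwc Hxc) => [E|Hwx|//].
          by subst; rewrite Nx in NNw.
        move/negP: Hs; elim; apply/skP; exists w; split => //.
        rewrite /Pm Hwx /=; apply/forallP => z; apply/implyP => Hz.
        by move: Pwc => /andP[_ /forallP Pwc]; apply: (implyP (Pwc z)); apply: atr Hz Hxc.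
      have Hwu : lam w < lam ux.
        move: (Pwc) => /andP[_ /forallP Pwc']; have := implyP (Pwc' ux) (atr Hux Hxc).
        have := anc_lt (atr Hux Hxw). lia'.
      apply: H2314; exists ux, x, w, c; split => //.
    * apply: H132; exists ux, x, c; split => //; rewrite /Q132; lia'.
- move=> C; split; first exact: C132 C.
  move=> [a [b [c [d [Hab Hbc Hcd [H1 H2 H3]]]]]].
  have Nb : isN lam b by apply/isNP; exists a; split => //; lia'.
  have Nd : isN lam d by apply/isNP; exists c; split => //; lia'.
  have [C1 C2] := C b d Nb Nd (atr Hbc Hcd).
  case: (boolP (sk (Pm lam) b d)) => Hs; last by have := C2 Hs a Hab; lia'.
  move/skP: Hs => [u [Pbu Pdu]]. move: (Pbu) => /andP[Hub _].
  have Pcu : Pm lam c u.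
    rewrite /Pm (atr Hub Hbc) /=; apply/forallP => z; apply/implyP => Hz.
    by move: Pdu => /andP[_ /forallP P]; apply: (implyP (P z)); apply: atr Hz Hcd.
  have Nc : isN lam c.
    apply/isNP; exists u; split; first exact: atr Hub Hbc.
    move: Pdu => /andP[_ /forallP P]; have := implyP (P c) Hcd.
    have := anc_lt (atr Hub Hbc). lia'.
  have [C1' _] := C b c Nb Nc Hbc.
  have : sk (Pm lam) b c by apply/skP; exists u.
  move/C1'. lia'.
Qed.

Lemma charA2 : (~ ch3 lam Q123 /\ ~ ch4 lam Q3142) <-> Cond lam (Pk lam) true.
Proof.
have OK := Pk_ok.
split.
- move=> [H123 H3142] x c Nx Nc Hxc.
  have [ux [Pux Hux Hlux NNux]] := EK OK Nx.
  have Hcx : lam c < lam x.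
    case: (lt_or (ancne Hxc)) => // Hl; exfalso.
    apply: H123; exists ux, x, c; split => //; rewrite /Q123; lia'.
  split; first by move=> _; apply/idP.
  move=> Hs v Hv; case: (lt_or (ancne (atr Hv Hxc))) => Hl //; exfalso.
  have [uc [Puc Huc Hluc NNuc]] := EK OK Nc.
  move: (Puc) => /and3P[_ _ /forallP Puc'].
  have Hucx : anc uc x.
    case: (atot (atr Hv Hxc) Huc) => [E|Hvu|Huv].
    + by subst.
    + have := implyP (Puc' v) Hvu. lia'.
    + exact: atr Huv Hv.
  move: (Pux) => /and3P[_ _ /forallP Pux'].
  case: (atot Hux Hucx) => [E|Hxu|Hux'].
  + subst; move/negP: Hs; apply; apply/skP; exists uc; split => //.
  + have := implyP (Puc' ux) Hxu => Hcu.
    apply: H3142; exists ux, uc, x, c; split => //; rewrite /Q3142; split; lia'.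
  + have := implyP (Pux' uc) Hux'. lia'.
- move=> C; split; first exact: C123 C.
  move=> [a [b [c [d [Hab Hbc Hcd [H1 H2 H3]]]]]].
  have Nc : isN lam c by apply/isNP; exists b; split => //; lia'.
  have Nd : isN lam d by apply/isNP; exists b; split; [exact: atr Hbc Hcd | lia'].
  have [C1 C2] := C c d Nc Nd Hcd.
  case: (boolP (sk (Pk lam) c d)) => Hs; last by have := C2 Hs b Hbc; lia'.
  move/skP: Hs => [u [Pcu Pdu]].
  move: (Pcu) => /and3P[Huc Hluc /forallP Pcu'].
  move: (Pdu) => /and3P[Hud Hlud /forallP Pdu'].
  have Had : anc a d by apply: atr Hab (atr Hbc Hcd).
  case: (atot Hud Had) => [E|Hua|Hau].
  + subst; lia'.
  + have Pau : Pk lam a u.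
      rewrite /Pk Hua /=; apply/andP; split; first lia'.
      apply/forallP => z; apply/implyP => Hz; have := implyP (Pcu' z) Hz. lia'.
    have Na : isN lam a by apply/isNP; exists u; split => //; lia'.
    have [C1' _] := C a c Na Nc (atr Hab Hbc).
    have : sk (Pk lam) a c by apply/skP; exists u.
    move/C1'. lia'.
  + have := implyP (Pcu' a) Hau. lia'.
Qed.

Lemma charB2 : (~ ch3 lam Q132 /\ ~ ch4 lam Q3124) <-> Cond lam (Pk lam) false.
Proof.
have OK := Pk_ok.
split.
- move=> [H132 H3124] x c Nx Nc Hxc.
  have [ux [Pux Hux Hlux NNux]] := EK OK Nx.
  split.
  + move=> /skP [u [Pxu Pcu]]; apply/negbTE/negP => Hl.
    have E : u = ux by case: OK => _ U _ _; apply: U Pxu Pux.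
    subst u.
    move: Pcu => /and3P[_ Hl2 _].
    apply: H132; exists ux, x, c; split => //; rewrite /Q132; lia'.
  + move=> Hs v Hv; case: (lt_or (ancne (atr Hv Hxc))) => Hl //; exfalso.
    case: (lt_or (ancne Hxc)) => Hcx.
    * have [uc [Puc Huc Hluc NNuc]] := EK OK Nc.
      move: (Puc) => /and3P[_ _ /forallP Puc'].
      move: (Pux) => /and3P[_ _ /forallP Pux'].
      case: (atot (atr Hux Hxc) Huc) => [E|Hxu|Hux'].
      - subst; move/negP: Hs; apply; apply/skP; exists uc; split => //.
      - have := implyP (Puc' ux) Hxu. lia'.
      - have := implyP (Pux' uc) Hux' => Hxuc.
        apply: H3124; exists uc, ux, x, c; split => //; rewrite /Q3124; split; lia'.
    * apply: H132; exists v, x, c; split => //; rewrite /Q132; lia'.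
- move=> C; split; first exact: C132 C.
  move=> [a [b [c [d [Hab Hbc Hcd [H1 H2 H3]]]]]].
  have Nc : isN lam c by apply/isNP; exists b; split => //; lia'.
  have Nd : isN lam d by apply/isNP; exists b; split; [exact: atr Hbc Hcd | lia'].
  have [C1 C2] := C c d Nc Nd Hcd.
  case: (boolP (sk (Pk lam) c d)) => Hs; last by have := C2 Hs b Hbc; lia'.
  move/skP: Hs => [u [Pcu Pdu]].
  move: (Pcu) => /and3P[Huc Hluc /forallP Pcu'].
  move: (Pdu) => /and3P[Hud Hlud /forallP Pdu'].
  have Had : anc a d by apply: atr Hab (atr Hbc Hcd).
  case: (atot Hud Had) => [E|Hua|Hau].
  + subst; lia'.
  + have Pau : Pk lam a u.
      rewrite /Pk Hua /=; apply/andP; split; first lia'.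
      apply/forallP => z; apply/implyP => Hz; have := implyP (Pdu' z) Hz. lia'.
    have Na : isN lam a by apply/isNP; exists u; split => //; lia'.
    have [C1' _] := C a c Na Nc (atr Hab Hbc).
    have : sk (Pk lam) a c by apply/skP; exists u.
    move/C1'. lia'.
  + have := implyP (Pdu' a) Hau. lia'.
Qed.
End Lam.

Definition lam0 (x : 'I_n) : nat := x.
Lemma lam0_inj : injective lam0. Proof. exact: val_inj. Qed.

Section Sigma.
Variable P0 : 'I_n -> 'I_n -> bool.
Hypothesis OK0 : KeyOK lam0 P0.

Definition grp x := [set y | isN lam0 y && sk P0 y x].
Definition sig x := if isN lam0 x then revs (grp x) x else x.

Lemma skR x : isN lam0 x -> sk P0 x x.
Proof. case: OK0 => E _ _ _ Nx; have [u Hu] := E x Nx; by apply/skP; exists u. Qed.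
Lemma skS x y : sk P0 x y -> sk P0 y x.
Proof. by move/skP => [u [H1 H2]]; apply/skP; exists u. Qed.
Lemma skT x y z : sk P0 x y -> sk P0 y z -> sk P0 x z.
Proof.
case: OK0 => _ U _ _ /skP [u [H1 H2]] /skP [u' [H1' H2']].
have E := U _ _ _ H2 H1'; subst; by apply/skP; exists u'.
Qed.

Lemma grp_mem x : isN lam0 x -> x \in grp x.
Proof. by move=> Nx; rewrite inE Nx skR. Qed.

Lemma grp_eq x y : sk P0 y x -> grp y = grp x.
Proof.
move=> H; apply/setP => z; rewrite !inE; case: (isN lam0 z) => //=.
apply/idP/idP => Hz; first exact: skT Hz H.
exact: skT Hz (skS H).
Qed.

Lemma sig1 x : ~~ isN lam0 x -> sig x = x.
Proof. by rewrite /sig => /negbTE ->. Qed.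

Lemma sig2 x : isN lam0 x -> isN lam0 (sig x) /\ sk P0 (sig x) x.
Proof.
move=> Nx; rewrite /sig Nx.
have := revs_in (grp_mem Nx); rewrite inE => /andP[-> ->]; done.
Qed.

Lemma sigK x : sig (sig x) = x.
Proof.
case: (boolP (isN lam0 x)) => Nx; last by rewrite !sig1.
have [N2 S2] := sig2 Nx.
rewrite {1}/sig N2 (grp_eq S2) /sig Nx revsK //; exact: grp_mem.
Qed.

Lemma sig_inj : injective sig. Proof. exact: can_inj sigK. Qed.

Lemma sig_lt x y : isN lam0 x -> isN lam0 y -> sk P0 x y ->
  (sig x < sig y) = (y < x).
Proof.
move=> Nx Ny Sxy; rewrite /sig Nx Ny (grp_eq (skS Sxy)) revs_lt //; first exact: grp_mem.
by rewrite inE Ny skS.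
Qed.

Definition lams x : nat := sig x.
Lemma lams_inj : injective lams.
Proof. by move=> x y /val_inj /sig_inj. Qed.

Lemma sigP x u : isN lam0 x -> P0 x u -> P0 (sig x) u.
Proof.
move=> Nx Pxu; have [N2 /skP [w [H1 H2]]] := sig2 Nx.
case: OK0 => _ U _ _; by rewrite (U _ _ _ H2 Pxu) in H1.
Qed.

Lemma inv1 x : isN lams x = isN lam0 x.
Proof.
case: (OK0) => E U K1 K2.
apply/idP/idP.
- move=> Ns; case: (boolP (isN lam0 x)) => // NNx; exfalso.
  move/isNP: Ns => [u [Hux Hl]]; move: Hl; rewrite /lams (sig1 NNx) => Hl.
  have Hxu := notNP NNx Hux.
  have Hne := anc_lt lam0_inj Hux.
  case: (boolP (isN lam0 u)) => Nu.
  + have [w [Puw Hwu Hlw NNw]] := EK OK0 Nu.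
    have [Nsu _] := sig2 Nu.
    have [_ Lw] := K1 _ _ Nsu (sigP Nu Puw).
    have := notNP NNx (atr Hwu Hux).
    have := anc_lt lam0_inj (atr Hwu Hux).
    rewrite /lam0 in Hl Lw Hxu Hne *. lia'.
  + rewrite (sig1 Nu) in Hl. rewrite /lam0 in Hl Hxu Hne. lia'.
- move=> Nx; have [u [Pxu Hux Hlu NNu]] := EK OK0 Nx.
  have [Nsx _] := sig2 Nx.
  have [_ L] := K1 _ _ Nsx (sigP Nx Pxu).
  apply/isNP; exists u; split => //; rewrite /lams (sig1 NNu); exact: L.
Qed.

Lemma Pm_sig x u : isN lam0 x -> P0 x u ->
  forall v, isN lam0 v -> P0 v u -> lam0 u < lams v.
Proof.
case: (OK0) => E U K1 K2 Nx Pxu v Nv Pvu.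
have [Nsv _] := sig2 Nv.
by have [_ L] := K1 _ _ Nsv (sigP Nv Pvu).
Qed.

Section Transfer.
Variable Ps : 'I_n -> 'I_n -> bool.
Hypothesis inv1 : forall x, isN lams x = isN lam0 x.
Hypothesis inv2 : forall x u, isN lam0 x -> Ps x u = P0 x u.

Lemma sk_inv x c : isN lam0 x -> isN lam0 c -> sk Ps x c = sk P0 x c.
Proof.
move=> Nx Nc; apply: eq_existsb => u; by rewrite inv2 // inv2.
Qed.

Lemma transfer b : Cond lam0 P0 b -> Cond lams Ps (~~ b).
Proof.
move=> C x c; rewrite !inv1 => Nx Nc Hxc.
have [C1 C2] := C x c Nx Nc Hxc.
rewrite sk_inv //; split.
- move=> Hs; rewrite /lams (sig_lt Nc Nx (skS Hs)) -(C1 Hs).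
  have := anc_lt lam0_inj Hxc; rewrite /lam0 => H. lia'.
- move=> Hs v Hv.
  have C2s := C2 Hs.
  case: (OK0) => E U K1 K2.
  have [u [Pcu Huc Hlu NNu]] := EK OK0 Nc.
  have Hxu : anc x u.
    case: (atot Huc Hxc) => [E'|Hux|//].
      by subst; rewrite Nx in NNu.
    have := C2s u Hux. lia'.
  have [Ns Ss] := sig2 Nc.
  have Pcs : P0 (sig c) u by apply: sigP.
  have [Hus _] := K1 _ _ Ns Pcs.
  have Hxs : anc x (sig c) := atr Hxu Hus.
  have Hs' : ~~ sk P0 x (sig c).
    apply/negP => H; move/negP: Hs; apply; exact: skT H Ss.
  have [_ C2'] := C x (sig c) Nx Ns Hxs.
  have Lv := C2' Hs' v Hv.
  rewrite /lams.
  case: (boolP (isN lam0 v)) => Nv; last by rewrite (sig1 Nv).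
  have [w [Pvw Hwv Hlw NNw]] := EK OK0 Nv.
  have Hvs : anc v (sig c) := atr Hv Hxs.
  have Hs2 : ~~ sk P0 v (sig c).
    apply/negP => /skP [w' [H1 H2]].
    have E1 := U _ _ _ H1 Pvw; subst w'.
    have E2 := U _ _ _ H2 Pcs; subst w.
    by move: (airr u); rewrite (atr Hwv (atr Hv Hxu)).
  have [_ C2v] := C v (sig c) Nv Ns Hvs.
  have L1 := C2v Hs2 w Hwv.
  have [Nsv Ssv] := sig2 Nv.
  have Pvs : P0 (sig v) w by apply: sigP.
  have [_ L2] := K1 _ _ Nsv Pvs.
  rewrite /lam0 in L1 L2. lia'.
Qed.
End Transfer.
End Sigma.

Lemma invM2 x u : isN lam0 x ->
  Pm (lams (Pm lam0)) x u = Pm lam0 x u.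
Proof.
have OK := Pm_ok lam0_inj.
have OKs := Pm_ok (lams_inj OK).
case: (OK) => E U K1 K2.
case: (OKs) => _ Us _ _.
move=> Nx; have [u0 [Pxu Hux Hlu NNu]] := EK OK Nx.
have Ps : Pm (lams (Pm lam0)) x u0.
  apply/andP; split; first exact: Hux.
  apply/forallP => v; apply/implyP => Hv.
  have e : lams (Pm lam0) u0 = lam0 u0 by rewrite /lams (sig1 _ NNu).
  rewrite e.
  move: (Pxu) => /andP[_ /forallP H0]; have := implyP (H0 v) Hv.
  case: (boolP (isN lam0 v)) => Nv; first last.
    have e2 : lams (Pm lam0) v = lam0 v by rewrite /lams (sig1 _ Nv).
    by rewrite e2.
  have [w [Pvw Hwv Hlw NNw]] := EK OK Nv.
  have := implyP (H0 w) (atr Hwv Hv).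
  have := Pm_sig OK Nv Pvw Nv Pvw.
  move=> H1 H2 H3. lia'.
apply/idP/idP => H.
- by rewrite (Us _ _ _ H Ps).
- by rewrite (U _ _ _ H Pxu).
Qed.

Lemma invK2 x u : isN lam0 x ->
  Pk (lams (Pk lam0)) x u = Pk lam0 x u.
Proof.
have OK := Pk_ok lam0_inj.
have OKs := Pk_ok (lams_inj OK).
case: (OK) => E U K1 K2.
case: (OKs) => _ Us _ _.
move=> Nx; have [u0 [Pxu Hux Hlu NNu]] := EK OK Nx.
have [Nsx _] := sig2 OK Nx.
have Psx := sigP OK Nx Pxu.
have Ps : Pk (lams (Pk lam0)) x u0.
  move: (Psx) => /and3P[_ L1 /forallP L2].
  have e : lams (Pk lam0) u0 = lam0 u0 by rewrite /lams (sig1 _ NNu).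
  apply/and3P; split; first exact: Hux.
    by rewrite e; exact: L1.
  apply/forallP => w; apply/implyP => Hw.
  have := implyP (L2 w) Hw.
  case: (boolP (isN lam0 w)) => Nw; first last.
    have e2 : lams (Pk lam0) w = lam0 w by rewrite /lams (sig1 _ Nw).
    by rewrite e2.
  have [w' [Pww Hww Hlw NNw]] := EK OK Nw.
  have := implyP (L2 w') (atr Hww Hw).
  have := Pm_sig OK Nw Pww Nw Pww.
  move=> H1 H2 H3. change (lam0 (sig (Pk lam0) x)) with (lams (Pk lam0) x) in H2. change (lam0 (sig (Pk lam0) x)) with (lams (Pk lam0) x) in H3. lia'.
apply/idP/idP => H.
- by rewrite (Us _ _ _ H Ps).
- by rewrite (U _ _ _ H Pxu).
Qed.

End Abs.


Section Forest.
Variables (n : nat) (f : parent_map n).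
Hypothesis Hf : is_forest f.

Lemma iter_None k : iter k (par f) None = None.
Proof. by elim: k => //= k ->. Qed.

Lemma iter_big x k : n <= k -> iter k (par f) (Some x) = None.
Proof.
move=> Hk; rewrite -(subnK Hk) iterD.
by move/forallP: Hf => /(_ x) /eqP ->; rewrite iter_None.
Qed.

Lemma ancP u v : reflect (exists k, iter k.+1 (par f) (Some v) = Some u) (strict_anc f u v).
Proof.
apply: (iffP existsP) => [[k /eqP H]|[k H]]; first by exists k.
have Hk : k < n.
  rewrite ltnNge; apply/negP => Hk; rewrite iter_big in H => //; lia.
by exists (Ordinal Hk); apply/eqP.
Qed.

Lemma anc_trans a b c : strict_anc f a b -> strict_anc f b c -> strict_anc f a c.
Proof.
move=> /ancP [k1 H1] /ancP [k2 H2]; apply/ancP; exists (k1 + k2.+1).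
by rewrite -addSn iterD H2 H1.
Qed.

Lemma anc_irr a : ~~ strict_anc f a a.
Proof.
apply/negP => /ancP [k H].
have Hm : forall m, iter (m * k.+1) (par f) (Some a) = Some a.
  by elim=> // m IH; rewrite mulSn iterD IH H.
by move: (Hm n); rewrite iter_big //; rewrite leq_pmulr.
Qed.

Lemma anc_tot a b c : strict_anc f a c -> strict_anc f b c ->
  [\/ a = b, strict_anc f a b | strict_anc f b a].
Proof.
move=> /ancP [k1 H1] /ancP [k2 H2].
case: (ltngtP k1 k2) => Hk.
- apply: Or33; apply/ancP; exists (k2 - k1).-1.
  have -> : ((k2 - k1).-1).+1 = k2 - k1 by lia.
  by rewrite -H2 -H1 -iterD; congr iter; lia.
- apply: Or32; apply/ancP; exists (k1 - k2).-1.
  have -> : ((k1 - k2).-1).+1 = k1 - k2 by lia.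
  by rewrite -H2 -H1 -iterD; congr iter; lia.
- by subst; apply: Or31; rewrite H1 in H2; case: H2.
Qed.
End Forest.

Section Conj.
Variables (n : nat) (s : 'I_n -> 'I_n).
Hypothesis sK : involutive s.
Definition cj (f : parent_map n) : parent_map n := [ffun y => omap s (f (s y))].

Lemma iter_cj f k y : iter k (par (cj f)) (Some y) = omap s (iter k (par f) (Some (s y))).
Proof.
elim: k => [|k IH] /=; first by rewrite sK.
rewrite IH; case: (iter k (par f) (Some (s y))) => [z|] //=.
by rewrite /cj ffunE sK.
Qed.

Lemma omap_eq (o : option 'I_n) u : (omap s o == Some u) = (o == Some (s u)).
Proof.
case: o => [z|] //=; apply/eqP/eqP => [[<-]|[->]]; by rewrite ?sK.
Qed.

Lemma anc_cj f u v : strict_anc (cj f) u v = strict_anc f (s u) (s v).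
Proof. by apply: eq_existsb => k; rewrite iter_cj omap_eq. Qed.

Lemma forest_cj f : is_forest (cj f) = is_forest f.
Proof.
apply/forallP/forallP => H x.
- move: (H (s x)); rewrite iter_cj sK; by case: (iter _ _ _).
- rewrite iter_cj; move: (H (s x)); by case: (iter _ _ _).
Qed.

Lemma cjK f : cj (cj f) = f.
Proof.
apply/ffunP => y; rewrite /cj !ffunE sK.
by case: (f y) => //= z; rewrite sK.
Qed.
End Conj.


Section Inst.
Variables (n : nat) (h : parent_map n).

Lemma hi3 p0 p1 p2 :
  has_instance h [:: p0; p1; p2] <-> exists a b c, [/\ strict_anc h a b, strict_anc h b c &
   forall i j, i < 3 -> j < 3 ->
     (nth a [:: a; b; c] i < nth a [:: a; b; c] j) = (nth 0 [:: p0; p1; p2] i < nth 0 [:: p0; p1; p2] j)].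
Proof.
split.
- case/existsP => t /forallP H.
  have H' : forall i j : 'I_3, ((i.+1 == j :> nat) ==> strict_anc h (t i) (t j)) &&
        ((t i < t j) == (nth 0 [:: p0; p1; p2] i < nth 0 [:: p0; p1; p2] j)).
    by move=> i j; exact: (forallP (H i) j).
  pose i0 : 'I_3 := @Ordinal 3 0 isT.
  pose i1 : 'I_3 := @Ordinal 3 1 isT.
  pose i2 : 'I_3 := @Ordinal 3 2 isT.
  exists (t i0), (t i1), (t i2); split.
  + by have /andP[/implyP HH _] := H' i0 i1; exact: (HH (erefl true)).
  + by have /andP[/implyP HH _] := H' i1 i2; exact: (HH (erefl true)).
  + move=> i j Hi Hj.
    have Ei : nth (t i0) [:: t i0; t i1; t i2] i = t (Ordinal Hi).
      by case: i Hi => [|[|[|i]]] Hi //=; apply: (f_equal t); exact: val_inj.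
    have Ej : nth (t i0) [:: t i0; t i1; t i2] j = t (Ordinal Hj).
      by case: j Hj => [|[|[|j]]] Hj //=; apply: (f_equal t); exact: val_inj.
    rewrite Ei Ej. by have /andP[_ /eqP ->] := H' (Ordinal Hi) (Ordinal Hj).
- move=> [a [b [c [Hab Hbc Hc]]]].
  apply/existsP; exists [ffun i : 'I_3 => nth a [:: a; b; c] i].
  apply/forallP => i; apply/forallP => j; rewrite !ffunE; apply/andP; split.
  + by case: i => [[|[|[|i]]] Hi] //; case: j => [[|[|[|j]]] Hj].
  + by apply/eqP; apply: Hc.
Qed.

Lemma hi4 p0 p1 p2 p3 :
  has_instance h [:: p0; p1; p2; p3] <-> exists a b c d, [/\ strict_anc h a b, strict_anc h b c,
   strict_anc h c d &
   forall i j, i < 4 -> j < 4 ->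
     (nth a [:: a; b; c; d] i < nth a [:: a; b; c; d] j) =
     (nth 0 [:: p0; p1; p2; p3] i < nth 0 [:: p0; p1; p2; p3] j)].
Proof.
split.
- case/existsP => t /forallP H.
  have H' : forall i j : 'I_4, ((i.+1 == j :> nat) ==> strict_anc h (t i) (t j)) &&
        ((t i < t j) == (nth 0 [:: p0; p1; p2; p3] i < nth 0 [:: p0; p1; p2; p3] j)).
    by move=> i j; exact: (forallP (H i) j).
  pose i0 : 'I_4 := @Ordinal 4 0 isT.
  pose i1 : 'I_4 := @Ordinal 4 1 isT.
  pose i2 : 'I_4 := @Ordinal 4 2 isT.
  pose i3 : 'I_4 := @Ordinal 4 3 isT.
  exists (t i0), (t i1), (t i2), (t i3); split.
  + by have /andP[/implyP HH _] := H' i0 i1; exact: (HH (erefl true)).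
  + by have /andP[/implyP HH _] := H' i1 i2; exact: (HH (erefl true)).
  + by have /andP[/implyP HH _] := H' i2 i3; exact: (HH (erefl true)).
  + move=> i j Hi Hj.
    have Ei : nth (t i0) [:: t i0; t i1; t i2; t i3] i = t (Ordinal Hi).
      by case: i Hi => [|[|[|[|i]]]] Hi //=; apply: (f_equal t); exact: val_inj.
    have Ej : nth (t i0) [:: t i0; t i1; t i2; t i3] j = t (Ordinal Hj).
      by case: j Hj => [|[|[|[|j]]]] Hj //=; apply: (f_equal t); exact: val_inj.
    rewrite Ei Ej. by have /andP[_ /eqP ->] := H' (Ordinal Hi) (Ordinal Hj).
- move=> [a [b [c [d [Hab Hbc Hcd Hc]]]]].
  apply/existsP; exists [ffun i : 'I_4 => nth a [:: a; b; c; d] i].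
  apply/forallP => i; apply/forallP => j; rewrite !ffunE; apply/andP; split.
  + by case: i => [[|[|[|[|i]]]] Hi] //; case: j => [[|[|[|[|j]]]] Hj].
  + by apply/eqP; apply: Hc.
Qed.

Ltac solve3 := move=> [|[|[|i]]] [|[|[|j]]] Hi Hj //=; lia.

Lemma inst123 : has_instance h [:: 1; 2; 3] <-> ch3 (strict_anc h) (@lam0 n) Q123.
Proof.
rewrite hi3; split.
- move=> [a [b [c [H1 H2 H]]]]; exists a, b, c; split => //.
  have := H 0 1 isT isT; have := H 1 2 isT isT; rewrite /lam0 /Q123 /=; lia.
- move=> [a [b [c [H1 H2 H]]]]; exists a, b, c; split => //.
  move: H; rewrite /lam0 /Q123 => H; solve3.
Qed.

Lemma inst132 : has_instance h [:: 1; 3; 2] <-> ch3 (strict_anc h) (@lam0 n) Q132.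
Proof.
rewrite hi3; split.
- move=> [a [b [c [H1 H2 H]]]]; exists a, b, c; split => //.
  have := H 0 2 isT isT; have := H 2 1 isT isT; rewrite /lam0 /Q132 /=; lia.
- move=> [a [b [c [H1 H2 H]]]]; exists a, b, c; split => //.
  move: H; rewrite /lam0 /Q132 => H; solve3.
Qed.

Ltac solve4 := move=> [|[|[|[|i]]]] [|[|[|[|j]]]] Hi Hj //=; lia.

Lemma inst2413 : has_instance h [:: 2; 4; 1; 3] <-> ch4 (strict_anc h) (@lam0 n) Q2413.
Proof.
rewrite hi4; split.
- move=> [a [b [c [d [H1 H2 H3 H]]]]]; exists a, b, c, d; split => //.
  have := H 2 0 isT isT; have := H 0 3 isT isT; have := H 3 1 isT isT; rewrite /lam0 /Q2413 /= => X Y Z; split; lia.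
- move=> [a [b [c [d [H1 H2 H3 H]]]]]; exists a, b, c, d; split => //.
  move: H; rewrite /lam0 /Q2413 => -[H4 H5 H6]; solve4.
Qed.

Lemma inst2314 : has_instance h [:: 2; 3; 1; 4] <-> ch4 (strict_anc h) (@lam0 n) Q2314.
Proof.
rewrite hi4; split.
- move=> [a [b [c [d [H1 H2 H3 H]]]]]; exists a, b, c, d; split => //.
  have := H 2 0 isT isT; have := H 0 1 isT isT; have := H 1 3 isT isT; rewrite /lam0 /Q2314 /= => X Y Z; split; lia.
- move=> [a [b [c [d [H1 H2 H3 H]]]]]; exists a, b, c, d; split => //.
  move: H; rewrite /lam0 /Q2314 => -[H4 H5 H6]; solve4.
Qed.

Lemma inst3142 : has_instance h [:: 3; 1; 4; 2] <-> ch4 (strict_anc h) (@lam0 n) Q3142.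
Proof.
rewrite hi4; split.
- move=> [a [b [c [d [H1 H2 H3 H]]]]]; exists a, b, c, d; split => //.
  have := H 1 3 isT isT; have := H 3 0 isT isT; have := H 0 2 isT isT; rewrite /lam0 /Q3142 /= => X Y Z; split; lia.
- move=> [a [b [c [d [H1 H2 H3 H]]]]]; exists a, b, c, d; split => //.
  move: H; rewrite /lam0 /Q3142 => -[H4 H5 H6]; solve4.
Qed.

Lemma inst3124 : has_instance h [:: 3; 1; 2; 4] <-> ch4 (strict_anc h) (@lam0 n) Q3124.
Proof.
rewrite hi4; split.
- move=> [a [b [c [d [H1 H2 H3 H]]]]]; exists a, b, c, d; split => //.
  have := H 1 2 isT isT; have := H 2 0 isT isT; have := H 0 3 isT isT; rewrite /lam0 /Q3124 /= => X Y Z; split; lia.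
- move=> [a [b [c [d [H1 H2 H3 H]]]]]; exists a, b, c, d; split => //.
  move: H; rewrite /lam0 /Q3124 => -[H4 H5 H6]; solve4.
Qed.
End Inst.


Section Nat.
Variables (n : nat) (anc anc' : rel 'I_n) (s : 'I_n -> 'I_n).
Hypothesis sK : involutive s.
Hypothesis Ha : forall u v, anc' u v = anc (s u) (s v).
Variables (lam lam' : 'I_n -> nat).
Hypothesis Hl : forall u, lam' (s u) = lam u.

Lemma ex_reidx (p : pred 'I_n) : [exists u, p u] = [exists u, p (s u)].
Proof.
apply/existsP/existsP => [[u H]|[u H]]; last by exists (s u).
by exists (s u); rewrite sK.
Qed.

Lemma all_reidx (p : pred 'I_n) : [forall u, p u] = [forall u, p (s u)].
Proof.
apply/forallP/forallP => H u; first exact: H.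
by rewrite -(sK u); exact: H.
Qed.

Lemma ch3_nat Q : ch3 anc' lam Q <-> ch3 anc lam' Q.
Proof.
split => [[a [b [c [H1 H2 H3]]]]|[a [b [c [H1 H2 H3]]]]].
- exists (s a), (s b), (s c); by rewrite !Hl -!Ha.
- exists (s a), (s b), (s c); rewrite !Ha !sK; split => //.
  by rewrite -!Hl !sK.
Qed.

Lemma ch4_nat Q : ch4 anc' lam Q <-> ch4 anc lam' Q.
Proof.
split => [[a [b [c [d [H1 H2 H3 H4]]]]]|[a [b [c [d [H1 H2 H3 H4]]]]]].
- exists (s a), (s b), (s c), (s d); by rewrite !Hl -!Ha.
- exists (s a), (s b), (s c), (s d); rewrite !Ha !sK; split => //.
  by rewrite -!Hl !sK.
Qed.

Lemma isN_nat x : isN anc' lam x = isN anc lam' (s x).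
Proof.
rewrite /isN ex_reidx; apply: eq_existsb => u.
by rewrite Ha !sK -(Hl (s u)) -(Hl x) !sK.
Qed.

Lemma Pm_nat x u : Pm anc' lam x u = Pm anc lam' (s x) (s u).
Proof.
rewrite /Pm Ha; congr (_ && _).
rewrite all_reidx; apply: eq_forallb => v.
by rewrite Ha sK -(Hl u) -(Hl (s v)) sK.
Qed.

Lemma Pk_nat x u : Pk anc' lam x u = Pk anc lam' (s x) (s u).
Proof.
rewrite /Pk Ha -(Hl x) -(Hl u); congr [&& _, _ & _].
rewrite all_reidx; apply: eq_forallb => v.
by rewrite Ha sK -(Hl (s v)) sK.
Qed.

Lemma sk_nat (P P' : 'I_n -> 'I_n -> bool) :
  (forall x u, P x u = P' (s x) (s u)) -> forall x y, sk P x y = sk P' (s x) (s y).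
Proof.
move=> HP x y; rewrite /sk ex_reidx; apply: eq_existsb => u.
by rewrite !HP sK.
Qed.
End Nat.

Lemma cj_ext n (s1 s2 : 'I_n -> 'I_n) (h : parent_map n) : s1 =1 s2 -> cj s1 h = cj s2 h.
Proof.
move=> E; apply/ffunP => y; rewrite !ffunE E.
by case: (h (s2 y)) => //= z; rewrite E.
Qed.

Section Main.
Variable K : forall n, rel 'I_n -> ('I_n -> nat) -> 'I_n -> 'I_n -> bool.
Hypothesis K_ok : forall n (anc : rel 'I_n),
  (forall a b c, anc a b -> anc b c -> anc a c) -> (forall a, ~~ anc a a) ->
  (forall a b c, anc a c -> anc b c -> [\/ a = b, anc a b | anc b a]) ->
  forall lam, injective lam -> KeyOK anc lam (K anc lam).
Hypothesis K_inv : forall n (anc : rel 'I_n),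
  (forall a b c, anc a b -> anc b c -> anc a c) -> (forall a, ~~ anc a a) ->
  (forall a b c, anc a c -> anc b c -> [\/ a = b, anc a b | anc b a]) ->
  forall x u, isN anc (@lam0 n) x -> K anc (lams anc (K anc (@lam0 n))) x u = K anc (@lam0 n) x u.
Hypothesis K_nat : forall n (anc anc' : rel 'I_n) s, involutive s ->
  (forall u v, anc' u v = anc (s u) (s v)) -> forall lam lam', (forall u, lam' (s u) = lam u) ->
  forall x u, K anc' lam x u = K anc lam' (s x) (s u).
Variables NA NB : forall n, rel 'I_n -> ('I_n -> nat) -> Prop.
Hypothesis NA_nat : forall n (anc anc' : rel 'I_n) s, involutive s ->
  (forall u v, anc' u v = anc (s u) (s v)) -> forall lam lam', (forall u, lam' (s u) = lam u) ->
  NA anc' lam <-> NA anc lam'.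
Hypothesis NB_nat : forall n (anc anc' : rel 'I_n) s, involutive s ->
  (forall u v, anc' u v = anc (s u) (s v)) -> forall lam lam', (forall u, lam' (s u) = lam u) ->
  NB anc' lam <-> NB anc lam'.
Hypothesis charA : forall n (anc : rel 'I_n),
  (forall a b c, anc a b -> anc b c -> anc a c) -> (forall a, ~~ anc a a) ->
  (forall a b c, anc a c -> anc b c -> [\/ a = b, anc a b | anc b a]) ->
  forall lam, injective lam -> NA anc lam <-> Cond anc lam (K anc lam) true.
Hypothesis charB : forall n (anc : rel 'I_n),
  (forall a b c, anc a b -> anc b c -> anc a c) -> (forall a, ~~ anc a a) ->
  (forall a b c, anc a c -> anc b c -> [\/ a = b, anc a b | anc b a]) ->
  forall lam, injective lam -> NB anc lam <-> Cond anc lam (K anc lam) false.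
Variables SA SB : seq (seq nat).
Hypothesis avA : forall n (f : parent_map n), avoids f SA <-> NA (strict_anc f) (@lam0 n).
Hypothesis avB : forall n (f : parent_map n), avoids f SB <-> NB (strict_anc f) (@lam0 n).

Variable n : nat.
Definition Phi (f : parent_map n) := cj (sig (strict_anc f) (K (strict_anc f) (@lam0 n))) f.

Section OneF.
Variable f : parent_map n.
Hypothesis Hf : is_forest f.
Let anc := strict_anc f.
Let atr := anc_trans Hf.
Let airr := anc_irr Hf.
Let atot := anc_tot Hf.
Let OK0 := K_ok atr airr atot (@lam0_inj n).
Let s := sig anc (K anc (@lam0 n)).
Let sK : involutive s := sigK OK0.
Let Hl : forall u, lams anc (K anc (@lam0 n)) (s u) = lam0 u.
Proof. move=> u; exact: (congr1 (@nat_of_ord n) (sK u)). Qed.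
Let Ha : forall u v, strict_anc (Phi f) u v = anc (s u) (s v).
Proof. by move=> u v; rewrite /Phi anc_cj. Qed.

Lemma forest_Phi : is_forest (Phi f).
Proof. by rewrite /Phi forest_cj. Qed.

Lemma dirAB : avoids f SA -> avoids (Phi f) SB.
Proof.
move/avA/(charA atr airr atot (@lam0_inj n)) => C.
have C' := transfer atr airr atot OK0 (inv1 atr airr OK0) (@K_inv _ _ atr airr atot) C.
move/(charB atr airr atot (lams_inj OK0)): C' => C''.
apply/avB; apply/(NB_nat sK Ha Hl); exact: C''.
Qed.

Lemma dirBA : avoids f SB -> avoids (Phi f) SA.
Proof.
move/avB/(charB atr airr atot (@lam0_inj n)) => C.
have C' := transfer atr airr atot OK0 (inv1 atr airr OK0) (@K_inv _ _ atr airr atot) C.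
move/(charA atr airr atot (lams_inj OK0)): C' => C''.
apply/avA; apply/(NA_nat sK Ha Hl); exact: C''.
Qed.

Lemma N_sig y : isN anc (@lam0 n) (s y) = isN anc (@lam0 n) y.
Proof.
case: (boolP (isN anc (@lam0 n) y)) => Ny; first by have [-> _] := sig2 OK0 Ny.
by rewrite /s (sig1 _ Ny) (negbTE Ny).
Qed.

Lemma PhiK : Phi (Phi f) = f.
Proof.
set g := Phi f.
have NE : forall y, isN (strict_anc g) (@lam0 n) y = isN anc (@lam0 n) y.
  move=> y; rewrite (isN_nat sK Ha Hl) (inv1 atr airr OK0) N_sig //.
have KE : forall x u, isN anc (@lam0 n) x ->
    K (strict_anc g) (@lam0 n) x u = K anc (@lam0 n) (s x) (s u).
  move=> x u Nx; rewrite (K_nat sK Ha Hl) (K_inv atr airr atot) //; by rewrite N_sig.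
have SE : forall z y, isN anc (@lam0 n) z -> isN anc (@lam0 n) y ->
    sk (K (strict_anc g) (@lam0 n)) z y = sk (K anc (@lam0 n)) z y.
  move=> z y Nz Ny.
  transitivity (sk (K anc (@lam0 n)) (s z) (s y)).
    rewrite /sk (ex_reidx sK); apply: eq_existsb => u; by rewrite !KE // !sK.
  have [_ Sz] := sig2 OK0 Nz; have [_ Sy] := sig2 OK0 Ny.
  apply/idP/idP => H.
  - apply: (skT OK0 (skS Sz)). apply: (skT OK0 H). exact: Sy.
  - apply: (skT OK0 Sz). apply: (skT OK0 H). exact: (skS Sy).
have SG : forall y, sig (strict_anc g) (K (strict_anc g) (@lam0 n)) y = s y.
  move=> y; rewrite /sig NE /s /sig.
  case: (boolP (isN anc (@lam0 n) y)) => Ny //.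
  congr revs; apply/setP => z; rewrite !inE NE.
  case: (boolP (isN anc (@lam0 n) z)) => Nz //=; exact: SE.
rewrite {1}/Phi -/g.
transitivity (cj s g).
  exact: cj_ext SG.
by rewrite /g /Phi -/anc -/s cjK.
Qed.
End OneF.

Lemma count_le (S S' : seq (seq nat)) :
  (forall f, is_forest f -> avoids f S -> avoids (Phi f) S') ->
  num_avoiding S n <= num_avoiding S' n.
Proof.
move=> H; rewrite /num_avoiding.
rewrite -(card_in_imset (f := Phi)); last first.
  move=> f1 f2; rewrite !inE => /andP[H1 _] /andP[H2 _] E.
  by rewrite -(PhiK H1) E PhiK.
apply: subset_leq_card; apply/subsetP => g /imsetP [f].
rewrite inE => /andP[Hf Hav] ->; rewrite inE forest_Phi //; exact: H.
Qed.

Lemma main_eq : num_avoiding SA n = num_avoiding SB n.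
Proof.
apply/eqP; rewrite eqn_leq; apply/andP; split; apply: count_le => f Hf.
- exact: dirAB.
- exact: dirBA.
Qed.
End Main.


Definition NA1 n (anc : rel 'I_n) lam := ~ ch3 anc lam Q123 /\ ~ ch4 anc lam Q2413.
Definition NB1 n (anc : rel 'I_n) lam := ~ ch3 anc lam Q132 /\ ~ ch4 anc lam Q2314.
Definition NA2 n (anc : rel 'I_n) lam := ~ ch3 anc lam Q123 /\ ~ ch4 anc lam Q3142.
Definition NB2 n (anc : rel 'I_n) lam := ~ ch3 anc lam Q132 /\ ~ ch4 anc lam Q3124.

Lemma N_nat (Q3 : nat -> nat -> nat -> Prop) (Q4 : nat -> nat -> nat -> nat -> Prop)
  n (anc anc' : rel 'I_n) s : involutive s ->
  (forall u v, anc' u v = anc (s u) (s v)) -> forall lam lam', (forall u, lam' (s u) = lam u) ->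
  (~ ch3 anc' lam Q3 /\ ~ ch4 anc' lam Q4) <-> (~ ch3 anc lam' Q3 /\ ~ ch4 anc lam' Q4).
Proof.
move=> sK Ha lam lam' Hl.
by rewrite (ch3_nat sK Ha Hl) (ch4_nat sK Ha Hl).
Qed.

Lemma av_gen n (f : parent_map n) p q (Q3 : nat -> nat -> nat -> Prop) (Q4 : nat -> nat -> nat -> nat -> Prop) :
  (has_instance f p <-> ch3 (strict_anc f) (@lam0 n) Q3) ->
  (has_instance f q <-> ch4 (strict_anc f) (@lam0 n) Q4) ->
  avoids f [:: p; q] <-> (~ ch3 (strict_anc f) (@lam0 n) Q3 /\ ~ ch4 (strict_anc f) (@lam0 n) Q4).
Proof.
move=> H3 H4; rewrite /avoids /= andbT; split.
- move=> /andP[/negP A /negP B]; split => [X|X]; [apply: A; exact/H3 | apply: B; exact/H4].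
- move=> [A B]; apply/andP; split; apply/negP => X; [apply: A; exact/H3 | apply: B; exact/H4].
Qed.

Theorem theorem3p4 :
  forest_wilf_equiv [:: [:: 1; 2; 3]; [:: 2; 4; 1; 3]] [:: [:: 1; 3; 2]; [:: 2; 3; 1; 4]] /\
  forest_wilf_equiv [:: [:: 1; 2; 3]; [:: 3; 1; 4; 2]] [:: [:: 1; 3; 2]; [:: 3; 1; 2; 4]].
Proof.
split => n.
- apply: (@main_eq (@Pm) _ _ _ (@NA1) (@NB1)).
  + by move=> m anc atr airr atot lam linj; exact: (@Pm_ok m anc atr lam linj).
  + by move=> m anc atr airr atot x u Nx; exact: (@invM2 m anc atr x u Nx).
  + by move=> m anc anc' s sK Ha lam lam' Hl x u; exact: (@Pm_nat m anc anc' s sK Ha lam lam' Hl x u).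
  + move=> m anc anc' s sK Ha lam lam' Hl; exact: (@N_nat _ _ m anc anc' s sK Ha lam lam' Hl).
  + move=> m anc anc' s sK Ha lam lam' Hl; exact: (@N_nat _ _ m anc anc' s sK Ha lam lam' Hl).
  + move=> m anc atr airr atot lam linj; exact: (@charA1 m anc atr airr atot lam linj).
  + move=> m anc atr airr atot lam linj; exact: (@charB1 m anc atr airr atot lam linj).
  + move=> m f; apply: av_gen; [exact: inst123 | exact: inst2413].
  + move=> m f; apply: av_gen; [exact: inst132 | exact: inst2314].
- apply: (@main_eq (@Pk) _ _ _ (@NA2) (@NB2)).
  + by move=> m anc atr airr atot lam linj; exact: (@Pk_ok m anc atr airr atot lam linj).
  + by move=> m anc atr airr atot x u Nx; exact: (@invK2 m anc atr airr atot x u Nx).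
  + by move=> m anc anc' s sK Ha lam lam' Hl x u; exact: (@Pk_nat m anc anc' s sK Ha lam lam' Hl x u).
  + move=> m anc anc' s sK Ha lam lam' Hl; exact: (@N_nat _ _ m anc anc' s sK Ha lam lam' Hl).
  + move=> m anc anc' s sK Ha lam lam' Hl; exact: (@N_nat _ _ m anc anc' s sK Ha lam lam' Hl).
  + move=> m anc atr airr atot lam linj; exact: (@charA2 m anc atr airr atot lam linj).
  + move=> m anc atr airr atot lam linj; exact: (@charB2 m anc atr airr atot lam linj).
  + move=> m f; apply: av_gen; [exact: inst123 | exact: inst3142].
  + move=> m f; apply: av_gen; [exact: inst132 | exact: inst3124].
Qed.
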